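(* Let $G$ be a finite simple connected graph. If $c_{\infty}(G)=1$ then every block of $G$ has domination number one.
   Context: Cops and Robber with an infinitely fast robber: the game is played on a graph $G$. A set of cops first choose initial vertices (several cops may share a vertex); then the robber, knowing their positions, chooses a vertex. Then the players move in alternating rounds, cops first. In the cops' turn each cop either stays or moves to an adjacent vertex; in the robber's turn she either stays or moves along any path of $G$ starting at her current vertex that contains no vertex currently occupied by a cop. The cops win if at some point a cop moves to the vertex occupied by the robber. $c_{\infty}(G)$ is the minimum number of cops for which the cops have a strategy that guarantees a win. A block of $G$ is either a maximal 2-connected subgraph of $G$ or an edge of $G$ not contained in any 2-connected subgraph. A block $B$ has domination number one if some vertex $x\in V(B)$ has every other vertex of $B$ adjacent to $x$. *)

(* Defs.v *)
From mathcomp Require Import all_boot.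
Set Implicit Arguments. Unset Strict Implicit. Unset Printing Implicit Defensive.

Section Graph.
Variables (T : finType) (e : rel T).

Definition induced_rel (S : {set T}) : rel T :=
  [rel x y | [&& e x y, x \in S & y \in S]].

Definition connected_in (S : {set T}) : Prop :=
  forall x y, x \in S -> y \in S -> connect (induced_rel S) x y.

Definition two_connected (S : {set T}) : Prop :=
  [/\ 3 <= #|S|, connected_in S & forall v, v \in S -> connected_in (S :\ v)].

Definition is_block (B : {set T}) : Prop :=
  (two_connected B /\ forall S : {set T}, B \proper S -> ~ two_connected S)
  \/ (exists u v, [/\ B = [set u; v], e u v &
        forall S : {set T}, u \in S -> v \in S -> ~ two_connected S]).

Definition dom_one (B : {set T}) : Prop :=
  exists2 x, x \in B & forall y, y \in B -> y != x -> e x y.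

Variable k : nat.
Definition cops := {ffun 'I_k -> T}.

Definition cop_move (c c' : cops) : Prop :=
  forall i, c' i = c i \/ e (c i) (c' i).

Definition robber_move (C : cops) (r r' : T) : Prop :=
  exists p : seq T, [/\ path e r p, last r p = r' &
                        all (fun v => v \notin codom C) (r :: p)].

Definition caught (C : cops) (r : T) : Prop := exists i, C i = r.

Definition hist (c : nat -> cops) (r : nat -> T) (n : nat) : seq (cops * T) :=
  [seq (c i, r i) | i <- iota 0 n.+1].

(* Play: cops start at c 0; robber (seeing c 0) picks r 0; in round n the
   cops move from c n to c n.+1 (chosen by the strategy from the history),
   they win if a cop is then on r n, otherwise the robber moves from r n to
   r n.+1.  The strategy [sigma] is winning if every play consistent with it
   (the robber's choices being arbitrary legal moves) is won by the cops
   after finitely many rounds, with all cop moves legal. *)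
Definition cops_win : Prop :=
  exists (c0 : cops) (sigma : seq (cops * T) -> cops),
  forall (c : nat -> cops) (r : nat -> T),
    c 0 = c0 ->
    (forall n, c n.+1 = sigma (hist c r n)) ->
    (forall n, (forall m, m <= n -> ~ caught (c m.+1) (r m)) ->
               robber_move (c n.+1) (r n) (r n.+1)) ->
    exists n, caught (c n.+1) (r n) /\ forall m, m <= n -> cop_move (c m) (c m.+1).

End Graph.

Definition cinf_is (T : finType) (e : rel T) (k : nat) : Prop :=
  cops_win e k /\ forall j, j < k -> ~ cops_win e j.

(* Main.v *)
Require Import Defs.
From mathcomp Require Import all_boot.
Set Implicit Arguments. Unset Strict Implicit. Unset Printing Implicit Defensive.

Section Aux.
Variables (T : finType) (e : rel T) (e_sym : symmetric e).

Lemma path_induced S x p : path (induced_rel e S) x p -> path e x p /\ all (fun v => v \in S) p.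
Proof.
elim: p x => [|y p IH] x //= /andP[/and3P[exy _ yS] /IH [hp ha]].
by rewrite exy hp yS ha.
Qed.

Lemma connected_add S x a : connected_in e S -> a \in S -> e x a ->
  connected_in e (x |: S).
Proof.
move=> cS aS xa.
have sub : forall u v, u \in S -> v \in S -> connect (induced_rel e (x |: S)) u v.
  move=> u v uS vS; apply: connect_sub (cS u v uS vS) => s t /and3P[st sS tS].
  by apply: connect1; rewrite /induced_rel /= st !inE sS tS !orbT.
have xa' : connect (induced_rel e (x |: S)) x a.
  by apply: connect1; rewrite /induced_rel /= xa !inE eqxx aS orbT.
have ax' : connect (induced_rel e (x |: S)) a x.
  by apply: connect1; rewrite /induced_rel /= e_sym xa !inE eqxx aS orbT.
move=> u v; rewrite !inE => /orP[/eqP->|uS] /orP[/eqP->|vS].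
- exact: connect0.
- exact: connect_trans xa' (sub _ _ aS vS).
- exact: connect_trans (sub _ _ uS aS) ax'.
- exact: sub.
Qed.

Lemma two_conn_add B x a b : two_connected e B -> x \notin B -> a \in B -> b \in B ->
  a != b -> e x a -> e x b -> two_connected e (x |: B).
Proof.
move=> [c3 cB cBv] xB aB bB ab xa xb; split.
- by apply: leq_trans c3 _; apply: subset_leq_card; apply/subsetP=> z zB; rewrite !inE zB orbT.
- exact: connected_add cB aB xa.
- move=> v; rewrite !inE => /orP[/eqP->|vB].
    have -> : (x |: B) :\ x = B.
      apply/setP=> z; rewrite !inE; case: (eqVneq z x) => [->|] //=.
      by rewrite (negbTE xB).
    exact: cB.
  have vx : v != x by apply: contraNneq xB => <-.
  have -> : (x |: B) :\ v = x |: (B :\ v).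
    apply/setP=> z; rewrite !inE; case: (eqVneq z x) => [->|] //=; by rewrite eq_sym vx.
  case: (eqVneq a v) => [av|av].
  + apply: (connected_add (cBv v vB)) xb.
    by rewrite !inE bB -av eq_sym ab.
  + apply: (connected_add (cBv v vB)) xa.
    by rewrite !inE aB av.
Qed.

End Aux.

Theorem mainTheorem9 (T : finType) (e : rel T)
  (e_sym : symmetric e) (e_irr : irreflexive e)
  (G_conn : connected_in e [set: T])
  (h : cinf_is e 1) :
  forall B : {set T}, is_block e B -> dom_one e B.
Proof.
move=> B [[tcB maxB]|[u [v [-> euv _]]]]; last first.
  exists u; first by rewrite !inE eqxx.
  by move=> y; rewrite !inE => /orP[/eqP->|/eqP->]; rewrite ?eqxx.
case: (boolP [exists x in B, forall y in B, (y != x) ==> e x y]) => [/exists_inP [x xB /forall_inP H]|nd].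
  by exists x => // y yB yx; apply: (implyP (H y yB)).
exfalso.
have tcB' := tcB; case: tcB' => [c3 cB cBv].
have ex : forall x, exists y, [&& y \in B, y != x & ~~ e x y].
  move=> x; apply/existsP; apply: contraT; rewrite negb_exists => /forallP all.
  have allE : forall y, y \in B -> y != x -> e x y.
    by move=> y yB yx; move: (all y); rewrite yB yx /= negbK.
  case: (boolP (x \in B)) => xB.
    exfalso; move/negP: nd; apply; apply/exists_inP; exists x => //; apply/forall_inP => y yB.
    by apply/implyP; exact: allE.
  have : 1 < #|B| by apply: leq_trans c3.
  case/card_gt1P => a [b [aB bB ab]].
  have ax : a != x by apply: contraNneq xB => <-.
  have bx : b != x by apply: contraNneq xB => <-.
  exfalso; apply: (maxB (x |: B)).
    by apply: properUr; rewrite sub1set.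
  exact: two_conn_add (allE a aB ax) (allE b bB bx).
pose g x := odflt x [pick y | [&& y \in B, y != x & ~~ e x y]].
have gP : forall x, [&& g x \in B, g x != x & ~~ e x (g x)].
  move=> x; rewrite /g; case: pickP => [y //|none].
  by case: (ex x) => y; rewrite none.
have conn : forall x, connected_in e (B :\ x).
  move=> x; case: (boolP (x \in B)) => xB; first exact: cBv.
  have -> : B :\ x = B.
    apply/setP=> z; rewrite !inE; case: (eqVneq z x) => [->|] //=; by rewrite (negbTE xB).
  exact: cB.
case: h => [[c0 [sigma W]] _].
pose step (H : seq (cops T 1 * T)) := rcons H (sigma H, g (sigma H ord0)).
pose Hs := fix Hs n := if n is n'.+1 then step (Hs n') else [:: (c0, g (c0 ord0))].
pose c n := if n is n'.+1 then sigma (Hs n') else c0.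
pose r n := g (c n ord0).
have hist_eq : forall n, hist c r n = Hs n.
  elim=> [|n IH]; first by [].
  have E : iota 0 n.+2 = rcons (iota 0 n.+1) n.+1.
    by rewrite -cats1 -(addn1 n.+1) iotaD.
  by rewrite /hist E map_rcons -/(hist c r n) IH.
have Hrob : forall n, (forall m, m <= n -> ~ caught (c m.+1) (r m)) -> robber_move e (c n.+1) (r n) (r n.+1).
  move=> n nc.
  have rn : r n \in B :\ c n.+1 ord0.
    rewrite !inE; case/and3P: (gP (c n ord0)) => -> _ _; rewrite andbT.
    by apply/eqP => E; apply: (nc n (leqnn n)); exists ord0.
  have rn1 : r n.+1 \in B :\ c n.+1 ord0.
    by rewrite !inE; case/and3P: (gP (c n.+1 ord0)) => -> -> _.
  case/connectP: (conn _ _ _ rn rn1) => p pth lst.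
  case: (path_induced pth) => pe pa.
  exists p; split => //.
  have notin : forall v, v \in B :\ c n.+1 ord0 -> v \notin codom (c n.+1).
    move=> v; rewrite !inE => /andP[vn _]; apply/codomP => [[j ej]].
    have j0 : j = ord0 by apply/val_inj; case: j {ej} => [[]].
    by move: vn; rewrite ej j0 eqxx.
  rewrite /= (notin _ rn) /=; apply/allP => v vp; apply: notin.
  exact: (allP pa).

have [n [[i ci] mv]] := W c r erefl (fun n => congr1 sigma (esym (hist_eq n))) Hrob.
have i0 : i = ord0 by apply/val_inj; case: i {ci} => [[]].
subst i.
move: (mv n (leqnn n) ord0) (gP (c n ord0)); rewrite -/(r n) -ci.
case=> [->|->]; first by rewrite eqxx andbF.
by rewrite !andbF.
Qed.
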